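(* There do not exist constants $\ell,m\in\mathbb{N}$ with the following property: every trinomial $f\in\mathbb{R}[x_1]$ that is positive on all of $\mathbb{R}$ can be written as $f=g_1^2+\cdots+g_\ell^2$ for some $g_1,\dots,g_\ell\in\mathbb{R}[x_1]$, each having at most $m$ monomial terms.
   Context: A trinomial is a univariate polynomial with exactly three nonzero monomial terms. *)

(* Defs.v *)
From HB Require Import structures.
From Stdlib Require Import Reals ClassicalEpsilon FunctionalExtensionality.
From mathcomp Require Import all_boot all_order all_algebra.
Set Implicit Arguments. Unset Strict Implicit. Unset Printing Implicit Defensive.
Import GRing.Theory.

HB.instance Definition _ := hasDecEq.Build R (@compareP R Req_EM_T).

Definition R_find (P : pred R) (n : nat) : option R :=
  match excluded_middle_informative (exists x, P x) with
  | left H => Some (proj1_sig (constructive_indefinite_description _ H))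
  | right _ => None
  end.

Lemma R_find_correct (P : pred R) n x : R_find P n = Some x -> P x.
Proof.
rewrite /R_find; case: excluded_middle_informative => // H [<-].
exact: (proj2_sig (constructive_indefinite_description _ H)).
Qed.

Lemma R_find_complete (P : pred R) : (exists x, P x) -> exists n, R_find P n.
Proof. by move=> H; exists 0%N; rewrite /R_find; case: excluded_middle_informative. Qed.

Lemma R_find_ext (P Q : pred R) : P =1 Q -> R_find P =1 R_find Q.
Proof. by move=> /functional_extensionality ->. Qed.

HB.instance Definition _ := hasChoice.Build R R_find_correct R_find_complete R_find_ext.

HB.instance Definition _ := GRing.isZmodule.Build R
  (fun x y z => esym (Rplus_assoc x y z)) Rplus_comm Rplus_0_l Rplus_opp_l.

Lemma R1_neq0 : R1 != R0.
Proof. by apply/eqP; exact: R1_neq_R0. Qed.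

HB.instance Definition _ := GRing.Zmodule_isComNzRing.Build R
  (fun x y z => esym (Rmult_assoc x y z)) Rmult_comm Rmult_1_l Rmult_plus_distr_r R1_neq0.

Definition nterms {T : nzRingType} (p : {poly T}) : nat :=
  count (fun c => c != 0%R) (polyseq p).

Definition trinomial {T : nzRingType} (p : {poly T}) : Prop := nterms p = 3%N.

(* Main.v *)
Require Import Defs.
From HB Require Import structures.
From Stdlib Require Import Reals Lra.
From mathcomp Require Import all_boot all_order all_algebra.
Import GRing.Theory.
Local Open Scope ring_scope.

Lemma exprR (x:R) n : (x ^+ n)%R = pow x n.
Proof. elim: n => [|n IH] //; rewrite exprS IH. reflexivity. Qed.

Lemma sq_pos_sum (l:nat) (c : 'I_l -> R) i0 :
  c i0 != 0%R -> Rlt 0 (\sum_(i<l) c i * c i)%R.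
Proof.
move=> /eqP H; rewrite (bigD1 i0) //=.
have H1 : Rle 0 (\sum_(i < l | i != i0) c i * c i)%R.
  elim/big_ind: _ => //; first by (change (Rle 0 0); lra).
  - by move=> x y; change (Rle 0 x -> Rle 0 y -> Rle 0 (Rplus x y)); lra.
  - by move=> i _; change (Rle 0 (Rmult (c i) (c i))); nra.
have H2 : Rlt 0 (Rmult (c i0) (c i0)) by apply: (Rsqr_pos_lt (c i0)); exact: H.
change (Rlt 0 (Rplus (Rmult (c i0) (c i0)) (\sum_(i < l | i != i0) c i * c i)%R)); lra.
Qed.

Lemma coef_sq (p : {poly R}) a :
  (forall c, (a < c <= 2*a)%N -> p`_c = 0%R) -> (p ^+ 2)`_(2*a)%N = (p`_a * p`_a)%R.
Proof.
move=> H; rewrite expr2 coefM.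
have Ha : (a < (2*a)%N.+1)%N by rewrite ltnS mul2n -addnn leq_addl.
rewrite (bigD1 (Ordinal Ha)) //= big1 ?addr0; first by rewrite mul2n -addnn addnK.
move=> j /eqP Hj.
have Hj2 := ltn_ord j; rewrite ltnS in Hj2.
case: (ltngtP j a) => Hja.
- rewrite (H (2*a - j)%N) ?mulr0 //.
  move: Hja; move: (nat_of_ord j) => k Hk.
  rewrite mul2n -addnn leq_subr andbT.
  by rewrite ltn_subRL ltn_add2r.
- by rewrite H ?mul0r // Hja.
- by exfalso; apply: Hj; apply: val_inj.
Qed.

Lemma nterms_iota (p : {poly R}) :
  nterms p = count (fun t => p`_t != 0%R) (iota 0 (size p)).
Proof.
rewrite /nterms -{1}(mkseq_nth 0%R p) /mkseq count_map. by [].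
Qed.

Lemma count_le_nterms (p:{poly R}) n (P : pred nat) :
  leq (count (fun t => P t && (p`_t != 0%R)) (iota 0 n)) (nterms p).
Proof.
rewrite nterms_iota.
apply: (@leq_trans (count (fun t => p`_t != 0%R) (iota 0 n))).
  by apply: sub_count => t /andP[].
case: (leqP n (size p)) => Hn.
- rewrite -(subnKC Hn) iotaD count_cat; exact: leq_addr.
- rewrite -(subnKC (ltnW Hn)) iotaD count_cat add0n.
  have -> : count (fun t => p`_t != 0%R) (iota (size p) (n - size p)) = 0%N.
    rewrite (@eq_in_count _ _ pred0) ?count_pred0 //.
    move=> t; rewrite mem_iota => /andP[Ht _] /=.
    by rewrite nth_default ?eqxx.
  by rewrite addn0.
Qed.

Definition fN (N : nat) : {poly R} := 1 + 'X + 'X^(2*N)%N.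

Lemma coef_fN N k : (fN N)`_k = ((k == 0%N)%:R + (k == 1%N)%:R + (k == (2*N)%N)%:R).
Proof. by rewrite /fN !coefD coef1 coefX coefXn. Qed.

Lemma fN_pos N : (0 < N)%N -> forall x : R, Rlt 0 (fN N).[x].
Proof.
move=> HN x; rewrite /fN !hornerE exprR.
change (Rlt 0 (Rplus (Rplus R1 x) (pow x (2*N)%N))).
have -> : (2*N)%N = (2*N)%coq_nat by [].
rewrite pow_mult.
have Hy : Rle 0 (pow x 2) by nra.
case: (Rle_lt_dec x (-1)) => Hx.
- have H1 : Rle 1 (pow x 2) by nra.
  have H2 : Rle (pow (pow x 2) 1) (pow (pow x 2) N).
    by apply: Rle_pow => //; apply/leP.
  rewrite pow_1 in H2. nra.
- have := pow_le _ N Hy. nra.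
Qed.

Lemma fN_trinomial N : (0 < N)%N -> trinomial (fN N).
Proof.
move=> HN; rewrite /trinomial.
have Hs : (size (fN N) <= (2*N).+1)%N.
  apply/leq_sizeP => j Hj; rewrite coef_fN.
  have H1 : (j == 1%N) = false.
    apply/negbTE; apply/eqP => E; move: Hj; rewrite E ltnS mul2n -addnn.
    by rewrite leqNgt (leq_trans HN (leq_addr _ _)).
  have H2 : (j == (2*N)%N) = false.
    by apply/negbTE; apply/eqP => E; move: Hj; rewrite E ltnn.
  have H0 : (j == 0%N) = false.
    by apply/negbTE; apply/eqP => E; move: Hj; rewrite E.
  by rewrite H0 H1 H2 /= !addr0.
have Hn : forall n, (size (fN N) <= n)%N ->
    nterms (fN N) = count (fun t => (fN N)`_t != 0) (iota 0 n).
  move=> n Hn; rewrite nterms_iota -(subnKC Hn) iotaD count_cat.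
  have -> : count (fun t => (fN N)`_t != 0) (iota (0 + size (fN N)) (n - size (fN N))) = 0%N.
    rewrite (@eq_in_count _ _ pred0) ?count_pred0 //.
    move=> t; rewrite mem_iota => /andP[Ht _] /=.
    by rewrite nth_default ?eqxx.
  by rewrite addn0.
rewrite (Hn _ Hs).
have H2N : (2 <= 2 * N)%N by rewrite mul2n -addnn; apply: (leq_add HN HN).
have E : ((2*N).+1 = 2 + ((2*N - 2) + 1))%N by rewrite addn1 addnS (subnKC H2N).
rewrite E !iotaD !count_cat /=.
rewrite (@eq_in_count _ _ pred0 (iota (0+2) (2*N-2))); last first.
  move=> t; rewrite mem_iota => /andP[Ht1 Ht2] /=.
  rewrite coef_fN.
  have -> : (t == 0%N) = false by apply/negbTE; apply/eqP => E'; move: Ht1; rewrite E'.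
  have -> : (t == 1%N) = false by apply/negbTE; apply/eqP => E'; move: Ht1; rewrite E'.
  have -> : (t == (2*N)%N) = false.
    by apply/negbTE; apply/eqP => E'; move: Ht2; rewrite E' add0n (subnKC H2N) ltnn.
  by rewrite /= !addr0 eqxx.
rewrite count_pred0 add0n (subnKC H2N) !coef_fN /=.
have -> : (0%N == (2*N)%N) = false by apply/negbTE; rewrite eq_sym -lt0n (leq_trans _ H2N).
have -> : (1%N == (2*N)%N) = false by apply/negbTE; apply/eqP => E'; move: H2N; rewrite -E'.
have -> : ((2*N)%N == 0%N) = false by apply/negbTE; rewrite -lt0n (leq_trans _ H2N).
have -> : ((2*N)%N == 1%N) = false by apply/negbTE; apply/eqP => E'; move: H2N; rewrite E'.
by rewrite eqxx /= ?addr0 ?add0r oner_neq0.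
Qed.

Lemma coef_sq1 (p : {poly R}) : p`_1 = 0 -> (p ^+ 2)`_1 = 0.
Proof. by move=> H; rewrite expr2 coefM big_ord_recr big_ord1 /= H mulr0 mul0r addr0. Qed.

Lemma theorem1p2_aux :
  ~ (exists l m : nat,
       forall f : {poly R},
         trinomial f ->
         (forall x : R, Rlt 0 f.[x]%R) ->
         exists g : 'I_l -> {poly R},
           (forall i, (nterms (g i) <= m)%N) /\
           f = (\sum_(i < l) g i ^+ 2)%R).
Proof.
move=> [l [m H]].
set K := (l * m)%N.
set N := (2 ^ K).+1.
have HN : (0 < N)%N by [].
have [g [Hg Hf]] := H (fN N) (fN_trinomial N HN) (fN_pos N HN).
have Hc e : (fN N)`_e = \sum_(i < l) (g i ^+ 2)`_e by rewrite Hf coef_sum.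
have S1 : exists i, (g i)`_1 != 0.
  case: (boolP [exists i, (g i)`_1 != 0]) => [/existsP //|/existsPn H0].
  exfalso; move: (Hc 1%N); rewrite big1; last first.
    by move=> i _; apply: coef_sq1; apply/eqP; move: (H0 i); rewrite negbK.
  rewrite coef_fN /=.
  have -> : (1%N == (2*N)%N) = false.
    by apply/negbTE; rewrite neq_ltn mul2n -addnn (leq_add HN HN).
  by rewrite add0r addr0; apply/eqP; rewrite oner_neq0.
have S2 a : (0 < a)%N -> a != N -> (exists i, (g i)`_a != 0) ->
    exists i c, [/\ (a < c)%N, (c <= 2 * a)%N & (g i)`_c != 0].
  move=> Ha0 HaN [i0 Hi0].
  case: (boolP [exists i, has (fun c => (g i)`_c != 0) (iota a.+1 a)]).
    move/existsP => [i /hasP [c]]; rewrite mem_iota => /andP[Hc1 Hc2] Hgc.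
    exists i, c; split => //.
    by rewrite -ltnS mul2n -addnn -addSn.
  move/existsPn => H0; exfalso.
  have Hz : forall i c, (a < c <= 2*a)%N -> (g i)`_c = 0.
    move=> i c /andP[Hc1 Hc2]; move: (H0 i); rewrite -all_predC => /allP Hall.
    have : c \in iota a.+1 a by rewrite mem_iota Hc1 /= addSn ltnS addnn -mul2n.
    by move/Hall => /= /negPn /eqP.
  move: (Hc (2 * a)%N).
  rewrite (eq_bigr (fun i => (g i)`_a * (g i)`_a)); last first.
    by move=> i _; apply: coef_sq => c; apply: Hz.
  rewrite coef_fN.
  have -> : ((2*a)%N == 0%N) = false by apply/negbTE; rewrite -lt0n muln_gt0 Ha0.
  have -> : ((2*a)%N == 1%N) = false.
    by apply/negbTE; rewrite eq_sym neq_ltn mul2n -addnn (leq_add Ha0 Ha0).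
  have -> : ((2*a)%N == (2*N)%N) = false by apply/negbTE; rewrite eqn_mul2l negb_or HaN.
  rewrite /= !addr0 => E.
  have := sq_pos_sum l (fun i => (g i)`_a) i0 Hi0; rewrite -E.
  by apply: Rlt_irrefl.
pose cnt (a : nat) := (\sum_(i < l) count (fun t => (0 < t) && ((g i)`_t != 0)%R) (iota 0 a.+1))%N.
have Hcnt a : (cnt a <= K)%N.
  rewrite /cnt /K.
  apply: (@leq_trans (\sum_(i < l) m)%N); first by apply: leq_sum => i _; apply: leq_trans (count_le_nterms _ _ _) (Hg i).
  by rewrite sum_nat_const card_ord.
have Hmono a c i0 : (a < c)%N -> (g i0)`_c != 0 -> ((cnt a).+1 <= cnt c)%N.
  move=> Hac Hgc.
  have E : c.+1 = (a.+1 + (c - a))%N by rewrite addSn subnKC // ltnW.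
  have -> : cnt c = (cnt a + \sum_(i < l) count (fun t => (0 < t) && ((g i)`_t != 0)%R) (iota a.+1 (c - a)))%N.
    by rewrite /cnt -big_split; apply: eq_bigr => i _; rewrite E iotaD count_cat.
  rewrite -addn1 leq_add2l.
  rewrite (bigD1 i0) //= (leq_trans _ (leq_addr _ _)) //.
  rewrite -has_count; apply/hasP; exists c.
    by rewrite mem_iota Hac /= -E.
  by rewrite Hgc (leq_ltn_trans _ Hac).
have Hind j : exists a, [/\ (0 < a)%N, (a <= 2 ^ j)%N, (exists i, (g i)`_a != 0)
     & (a == N) || (j < cnt a)%N].
  elim: j => [|j [a [Ha0 Ha2 Hai Hor]]].
    exists 1%N; split => //.
    case: S1 => i Hi; rewrite -/(Nat.lt 0 _) /=. apply/orP; right.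
    apply: (leq_trans _ (Hmono 0%N 1%N i _ Hi)) => //.
  case: (boolP (a == N)) => HaN.
    exists a; split => //; first by rewrite (leq_trans Ha2) // leq_pexp2l.
    by rewrite HaN.
  have [i [c [Hac Hc2 Hgc]]] := S2 a Ha0 HaN Hai.
  exists c; split.
  - exact: leq_ltn_trans Hac.
  - by rewrite (leq_trans Hc2) // expnS leq_mul2l Ha2 orbT.
  - by exists i.
  - apply/orP; right; rewrite (negbTE HaN) /= in Hor.
    by apply: (leq_trans _ (Hmono a c i Hac Hgc)).
have [a [_ Ha2 _ Hor]] := Hind K.
case/orP: Hor => [/eqP E|Hlt].
  by move: Ha2; rewrite E /N ltnn.
by move: (leq_trans Hlt (Hcnt a)); rewrite ltnn.
Qed.

Local Close Scope ring_scope.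

Theorem theorem1p2 :
  ~ (exists l m : nat,
       forall f : {poly R},
         trinomial f ->
         (forall x : R, Rlt 0 f.[x]%R) ->
         exists g : 'I_l -> {poly R},
           (forall i, (nterms (g i) <= m)%N) /\
           f = (\sum_(i < l) g i ^+ 2)%R).
Proof. exact: theorem1p2_aux. Qed.
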